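(* Let $\mathbb{K}=(G,M,I)$ be a formal context and let $\operatorname{Ext}(\mathbb{K})$ be its set of extents. Consider the lattice ${\downarrow}\operatorname{Ext}(\mathbb{K})$ of all closure systems $\mathcal{R}$ on $G$ with $\mathcal{R}\subseteq \operatorname{Ext}(\mathbb{K})$, ordered by set inclusion. For $\mathcal{R}\in{\downarrow}\operatorname{Ext}(\mathbb{K})$ the following are equivalent: (1) $\mathcal{R}$ is join-irreducible in ${\downarrow}\operatorname{Ext}(\mathbb{K})$; (2) there exists $A\in\operatorname{Ext}(\mathbb{K})\setminus\{G\}$ with $\mathcal{R}=\{G,A\}$.
   Context: A formal context is a triple $(G,M,I)$ with finite nonempty sets $G$ (objects), $M$ (attributes) and $I\subseteq G\times M$. Derivations: for $A\subseteq G$, $A'=\{m\in M\mid \forall a\in A:(a,m)\in I\}$; for $B\subseteq M$, $B'=\{g\in G\mid \forall b\in B:(g,b)\in I\}$. An extent is a set $A\subseteq G$ with $A''=A$; $\operatorname{Ext}(\mathbb{K})$ is the set of all extents (it contains $G$ and is closed under intersections). A closure system on $G$ is a family of subsets of $G$ containing $G$ and closed under arbitrary intersections. In ${\downarrow}\operatorname{Ext}(\mathbb{K})$ the meet is intersection and the join of a family is the smallest closure system on $G$ containing its union; the least element is $\{G\}$. An element $x$ of a lattice is join-irreducible if $x\neq\bot$ and $x=\bigvee Y$ implies $x\in Y$. *)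

(* Defs.v *)
From mathcomp Require Import all_boot.
Set Implicit Arguments. Unset Strict Implicit. Unset Printing Implicit Defensive.

Section FCA.
Variables (G M : finType) (I : G -> M -> bool).

Definition intent (A : {set G}) : {set M} := [set m | [forall g in A, I g m]].
Definition extent_of (B : {set M}) : {set G} := [set g | [forall m in B, I g m]].

Definition is_extent (A : {set G}) : bool := extent_of (intent A) == A.

Definition Ext : {set {set G}} := [set A | is_extent A].

(* Closure system on G: contains G and closed under arbitrary intersections
   (the intersection of the empty subfamily is G). *)
Definition closure_system (R : {set {set G}}) : bool :=
  (setT \in R) && [forall F : {set {set G}}, (F \subset R) ==> ((\bigcap_(A in F) A) \in R)].

Definition downExt (R : {set {set G}}) : bool := closure_system R && (R \subset Ext).

(* Join in ↓Ext(K) of a family Y: smallest closure system on G containing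
   the union of Y, i.e. the intersection of all closure systems containing it. *)
Definition cs_join (Y : {set {set {set G}}}) : {set {set G}} :=
  \bigcap_(S : {set {set G}} | closure_system S && ((\bigcup_(R in Y) R) \subset S)) S.

Definition cs_bot : {set {set G}} := [set setT].

Definition join_irreducible (R : {set {set G}}) : Prop :=
  R <> cs_bot /\
  forall Y : {set {set {set G}}}, (forall S, S \in Y -> downExt S) ->
    R = cs_join Y -> R \in Y.
End FCA.

(* Main.v *)
Require Import Defs.
From mathcomp Require Import all_boot.
Set Implicit Arguments. Unset Strict Implicit.

Section H.
Variables (G M : finType) (I : G -> M -> bool).

Lemma cs2 (A : {set G}) : closure_system [set setT; A].
Proof.
rewrite /closure_system !inE eqxx /=; apply/forallP => F; apply/implyP => sF.
have mem : forall B, B \in F -> B = setT \/ B = A.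
  by move=> B /(subsetP sF); rewrite !inE => /orP [] /eqP ->; [left|right].
case AF: (A \in F).
  have -> : \bigcap_(B in F) B = A.
    apply/eqP; rewrite eqEsubset; apply/andP; split; first exact: bigcap_inf.
    by apply/bigcapsP => B /mem [] ->; rewrite ?subsetT.
  by rewrite !inE eqxx orbT.
have -> : \bigcap_(B in F) B = setT.
  apply/eqP; rewrite eqEsubset subsetT /=.
  apply/bigcapsP => B BF; case: (mem B BF) => E; first by rewrite E.
  by rewrite -E BF in AF.
by rewrite !inE eqxx.
Qed.

Lemma join_sub (Y : {set {set {set G}}}) S :
  closure_system S -> (\bigcup_(R in Y) R) \subset S -> cs_join Y \subset S.
Proof. by move=> h1 h2; rewrite /cs_join; apply: bigcap_inf; rewrite h1 h2. Qed.

Lemma sub_join (Y : {set {set {set G}}}) :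
  (\bigcup_(R in Y) R) \subset cs_join Y.
Proof. by apply/bigcapsP => S /andP []. Qed.
End H.

Theorem proposition3 (G M : finType) (I : G -> M -> bool)
  (g0 : G) (m0 : M) (R : {set {set G}}) :
  downExt I R ->
  (join_irreducible I R <->
   exists A : {set G}, A \in Ext I /\ A != setT /\ R = [set setT; A]).
Proof.
move=> /andP [csR sRE]; have TR : setT \in R by case/andP: csR.
split.
- case=> nbot ji.
  pose Y := [set [set setT; A] | A in R].
  have hY : R \in Y.
    apply: ji.
      move=> S /imsetP [A AR ->]; rewrite /downExt cs2 /=.
      by apply/subsetP => B; rewrite !inE => /orP [] /eqP ->;
        [move: (subsetP sRE _ TR) | move: (subsetP sRE _ AR)]; rewrite inE.
    suff: R == cs_join Y by move/eqP.
    rewrite eqEsubset; apply/andP; split; last first.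
      apply: join_sub => //; apply/bigcupsP => S /imsetP [A AR ->].
      by apply/subsetP => B; rewrite !inE => /orP [] /eqP ->.
    apply: subset_trans _ (sub_join _).
    apply/subsetP => B BR; apply/bigcupP; exists [set setT; B].
      by apply/imsetP; exists B.
    by rewrite !inE eqxx orbT.
  case/imsetP: hY => A AR RE; exists A; split; first exact: (subsetP sRE).
  split=> //; apply/negP => /eqP AT; apply: nbot.
  by rewrite RE AT /cs_bot setUid.
- case=> A [AE [AT RE]]; split.
    move=> RB; have : A \in R by rewrite RE !inE eqxx orbT.
    by rewrite RB /cs_bot inE (negbTE AT).
  move=> Y hY RJ.
  have sub : forall S, S \in Y -> S \subset R.
    move=> S SY; rewrite RJ; apply/subsetP => B0 HB0; apply: (subsetP (sub_join _)); move: B0 HB0; apply/subsetP.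
    exact: bigcup_sup.
  case: (boolP [exists S in Y, A \in S]).
    case/exists_inP => S SY AS.
    have -> : R = S => //.
    apply/eqP; rewrite eq_sym eqEsubset sub //=.
    rewrite RE; apply/subsetP => B; rewrite !inE => /orP [] /eqP -> //.
    by case/andP: (hY S SY) => /andP [].
  move=> /exists_inPn nA.
  have hU : \bigcup_(S in Y) S \subset [set setT; setT].
    apply/bigcupsP => S SY; apply/subsetP => B BS.
    rewrite !inE orbb.
    have : B \in R by apply: (subsetP (sub S SY)).
    rewrite RE !inE => /orP [] // /eqP BA.
    by move: (nA S SY); rewrite -BA BS.
  have : A \in cs_join Y by rewrite -RJ RE !inE eqxx orbT.
  move=> /(subsetP (join_sub (cs2 setT) hU)).
  by rewrite !inE orbb (negbTE AT).
Qed.
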